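(* Let $\rho_n$ ($n\ge0$) be constants, and for each pair $s,\delta>0$ with $1/s$ an integer and $\delta<s/2$ let $A=A_{s,\delta}$ be a $C^\infty$ diffeomorphism of $[0,1]$ such that: $A=\mathrm{Id}+a$ with $a$ a non-negative $C^\infty$ function of period $s$; $A(0)=0$, $A(\delta)=s-\delta$, $A(s)=s$; $\delta/(2s)\le A'\le 2s/\delta$; and $\|A\|_n\le\rho_n/\delta^{n^2}$ for every $n\ge0$. Then for any $n\ge0$ and any $C^n$ diffeomorphism $h$ of $[0,1]$ (equivalently of the circle $\mathbb R/\mathbb Z\cong[0,1]$) there is a constant $\tilde c(h,n)$, depending on $h$ and $n$ but not on $\delta$ and $s$, such that $$\|A_{s,\delta}\circ h\|_n\le \tilde c(h,n)/\delta^{n^2}$$ for all such $s,\delta$.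
   Context: For a $C^n$ diffeomorphism $g$ of $[0,1]$, $\|g\|_n^*=\max|g^{(i)}(x)|$, the maximum over all $x\in[0,1]$ and $0\le i\le n$, and $\|g\|_n=\max\{\|g\|_n^*,\|g^{-1}\|_n^*\}$. *)

(* Defs.v *)
From Stdlib Require Import Reals.
From Coquelicot Require Import Coquelicot.
Open Scope R_scope.

(* Functions of [0,1] are represented by functions R -> R (any C^n function
   on [0,1] extends to a C^n function on R); only values/derivatives on
   [0,1] enter the norms. *)

Definition Cn (n : nat) (g : R -> R) : Prop :=
  forall (k : nat) (x : R), (k <= n)%nat ->
    ex_derive_n g k x /\ continuous (Derive_n g k) x.

Definition Cn_diffeo (n : nat) (g ginv : R -> R) : Prop :=
  Cn n g /\ Cn n ginv /\
  (forall x, 0 <= x <= 1 -> 0 <= g x <= 1 /\ ginv (g x) = x) /\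
  (forall y, 0 <= y <= 1 -> 0 <= ginv y <= 1 /\ g (ginv y) = y).

Definition cnorm_star (n : nat) (g : R -> R) : Rbar :=
  Lub_Rbar (fun r => exists (i : nat) (x : R),
    (i <= n)%nat /\ 0 <= x <= 1 /\ r = Rabs (Derive_n g i x)).

Definition cnorm (n : nat) (g ginv : R -> R) : Rbar :=
  match Rbar_le_dec (cnorm_star n g) (cnorm_star n ginv) with
  | left _ => cnorm_star n ginv
  | right _ => cnorm_star n g
  end.

Definition admissible (s delta : R) : Prop :=
  0 < s /\ 0 < delta /\ delta < s / 2 /\ exists k : nat, / s = INR k.

Definition A_hyp (rho : nat -> R) (s delta : R) (A Ainv : R -> R) : Prop :=
  (forall n, Cn_diffeo n A Ainv) /\
  (exists a : R -> R,
     (forall n, Cn n a) /\ (forall x, 0 <= a x) /\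
     (forall x, a (x + s) = a x) /\
     (forall x, 0 <= x <= 1 -> A x = x + a x)) /\
  A 0 = 0 /\ A delta = s - delta /\ A s = s /\
  (forall x, 0 <= x <= 1 ->
     delta / (2 * s) <= Derive A x <= 2 * s / delta) /\
  (forall n : nat, Rbar_le (cnorm n A Ainv) (Finite (rho n / delta ^ (n * n)))).

(* Main.v *)
Require Import Defs.
From Stdlib Require Import Reals Lia Lra.
From Coquelicot Require Import Coquelicot.
Open Scope R_scope.

Inductive fexpr := EF (k : nat) | EG (j : nat) | EAdd (a b : fexpr) | EMul (a b : fexpr).

Fixpoint ev (f g : R -> R) (e : fexpr) (x : R) : R :=
  match e with
  | EF k => Derive_n f k (g x)
  | EG j => Derive_n g j x
  | EAdd a b => ev f g a x + ev f g b x
  | EMul a b => ev f g a x * ev f g b x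
  end.

Fixpoint dx (e : fexpr) : fexpr :=
  match e with
  | EF k => EMul (EF (S k)) (EG 1)
  | EG j => EG (S j)
  | EAdd a b => EAdd (dx a) (dx b)
  | EMul a b => EAdd (EMul (dx a) b) (EMul a (dx b))
  end.

Fixpoint ord (e : fexpr) : nat :=
  match e with
  | EF k => k | EG j => j
  | EAdd a b => Nat.max (ord a) (ord b)
  | EMul a b => Nat.max (ord a) (ord b)
  end.

Fixpoint Eit (i : nat) : fexpr := match i with O => EF 0 | S i => dx (Eit i) end.

Lemma ord_dx e : (ord (dx e) <= S (ord e))%nat.
Proof. induction e; simpl; lia. Qed.

Lemma ord_E i : (ord (Eit i) <= i)%nat.
Proof. induction i; simpl; auto. pose proof (ord_dx (Eit i)); lia. Qed.

Lemma is_der_ev f g N e x : Cn N f -> Cn N g -> (ord e < N)%nat ->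
  is_derive (ev f g e) x (ev f g (dx e) x).
Proof.
  intros Hf Hg. induction e; simpl; intros Ho.
  - assert (H1 : is_derive (Derive_n f k) (g x) (Derive_n f (S k) (g x))).
    { simpl. apply Derive_correct. destruct (Hf (S k) (g x)) as [H _]; [lia|exact H]. }
    assert (H2 : is_derive g x (Derive_n g 1 x)).
    { simpl. apply Derive_correct. destruct (Hg 1%nat x) as [H _]; [lia|exact H]. }
    pose proof (is_derive_comp _ _ _ _ _ H1 H2) as H.
    rewrite Rmult_comm; exact H.
  - simpl. apply Derive_correct. destruct (Hg (S j) x) as [H _]; [lia|exact H].
  - apply (is_derive_plus (ev f g e1) (ev f g e2)); [apply IHe1|apply IHe2]; lia.
  - pose proof (is_derive_mult (ev f g e1) (ev f g e2) x _ _ (IHe1 ltac:(lia)) (IHe2 ltac:(lia)) ltac:(intros; apply Rmult_comm)) as H.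
    exact H.
Qed.

Lemma Dn_comp f g N i x : Cn N f -> Cn N g -> (i <= N)%nat ->
  Derive_n (fun t => f (g t)) i x = ev f g (Eit i) x.
Proof.
  intros Hf Hg. revert x. induction i; intros x Hi; simpl; [reflexivity|].
  rewrite (Derive_ext _ (ev f g (Eit i))); [|intro t; apply IHi; lia].
  apply is_derive_unique. apply (is_der_ev f g N); auto.
  pose proof (ord_E i); lia.
Qed.

Fixpoint wt (b : bool) (e : fexpr) : nat :=
  match e with
  | EF k => if b then k else 0%nat
  | EG j => if b then 0%nat else j
  | EAdd a c => Nat.max (wt b a) (wt b c)
  | EMul a c => (wt b a + wt b c)%nat
  end.

Fixpoint Kst (cF cG : nat -> R) (e : fexpr) : R :=
  match e with
  | EF k => cF k | EG j => cG j
  | EAdd a c => Kst cF cG a + Kst cF cG c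
  | EMul a c => Kst cF cG a * Kst cF cG c
  end.

Lemma wt_dx b e : (wt b (dx e) <= S (wt b e))%nat.
Proof. induction e; destruct b; simpl; lia. Qed.

Lemma wt_E b i : (wt b (Eit i) <= i)%nat.
Proof. induction i; destruct b; simpl; auto; pose proof (wt_dx true (Eit i)); pose proof (wt_dx false (Eit i)); lia. Qed.

Lemma Cst_nn cF cG e : (forall k, 0 <= cF k) -> (forall j, 0 <= cG j) -> 0 <= Kst cF cG e.
Proof. intros. induction e; simpl; auto; try apply Rplus_le_le_0_compat; try apply Rmult_le_pos; auto. Qed.

Lemma bound_ev (f g : R -> R) (b : bool) (cF cG : nat -> R) (D : R) (N : nat) (e : fexpr) (x : R) : 1 <= D ->
  (forall k, 0 <= cF k) -> (forall j, 0 <= cG j) -> (ord e <= N)%nat ->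
  (forall k, (k <= N)%nat -> Rabs (Derive_n f k (g x)) <= cF k * D ^ (if b then (k * k)%nat else 0%nat)) ->
  (forall j, (j <= N)%nat -> Rabs (Derive_n g j x) <= cG j * D ^ (if b then 0%nat else (j * j)%nat)) ->
  Rabs (ev f g e x) <= Kst cF cG e * D ^ (wt b e * wt b e).
Proof.
  intros HD HcF HcG Ho HF HG.
  assert (Hp : forall m, 0 < D ^ m) by (intro; apply pow_lt; lra).
  induction e; simpl in *.
  - destruct b; simpl; [apply HF; lia|]. apply (HF k); lia.
  - destruct b; simpl; [|apply HG; lia]. apply (HG j); lia.
  - eapply Rle_trans; [apply Rabs_triang|].
    set (m := Nat.max (wt b e1) (wt b e2)).
    assert (A1 := IHe1 ltac:(lia)). assert (A2 := IHe2 ltac:(lia)).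
    assert (P1 : D ^ (wt b e1 * wt b e1) <= D ^ (m * m)) by (apply Rle_pow; auto; subst m; nia).
    assert (P2 : D ^ (wt b e2 * wt b e2) <= D ^ (m * m)) by (apply Rle_pow; auto; subst m; nia).
    pose proof (Cst_nn cF cG e1 HcF HcG). pose proof (Cst_nn cF cG e2 HcF HcG).
    assert (Q1 : Kst cF cG e1 * D ^ (wt b e1 * wt b e1) <= Kst cF cG e1 * D ^ (m*m)) by (apply Rmult_le_compat_l; auto).
    assert (Q2 : Kst cF cG e2 * D ^ (wt b e2 * wt b e2) <= Kst cF cG e2 * D ^ (m*m)) by (apply Rmult_le_compat_l; auto).
    lra.
  - rewrite Rabs_mult.
    assert (A1 := IHe1 ltac:(lia)). assert (A2 := IHe2 ltac:(lia)).
    pose proof (Cst_nn cF cG e1 HcF HcG). pose proof (Cst_nn cF cG e2 HcF HcG).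
    eapply Rle_trans; [apply Rmult_le_compat; try apply Rabs_pos; [exact A1|exact A2]|].
    replace (Kst cF cG e1 * D ^ (wt b e1 * wt b e1) * (Kst cF cG e2 * D ^ (wt b e2 * wt b e2)))
      with (Kst cF cG e1 * Kst cF cG e2 * D ^ (wt b e1 * wt b e1 + wt b e2 * wt b e2)) by (rewrite pow_add; ring).
    apply Rmult_le_compat_l; [apply Rmult_le_pos; auto|]. apply Rle_pow; auto; nia.
Qed.

Fixpoint Csum (cF cG : nat -> R) (n : nat) : R :=
  match n with O => Kst cF cG (Eit 0) | S m => Csum cF cG m + Kst cF cG (Eit (S m)) end.

Lemma Csum_ge cF cG n i : (forall k, 0 <= cF k) -> (forall j, 0 <= cG j) -> (i <= n)%nat ->
  Kst cF cG (Eit i) <= Csum cF cG n.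
Proof.
  intros H1 H2. revert i; induction n; intros i Hi.
  - replace i with 0%nat by lia. apply Rle_refl.
  - change (Csum cF cG (S n)) with (Csum cF cG n + Kst cF cG (Eit (S n))).
    destruct (Nat.eq_dec i (S n)) as [->|Hne].
    + assert (0 <= Csum cF cG n) by (eapply Rle_trans; [apply (Cst_nn cF cG (Eit 0) H1 H2)|apply (IHn 0%nat); lia]). lra.
    + pose proof (Cst_nn cF cG (Eit (S n)) H1 H2). specialize (IHn i ltac:(lia)). lra.
Qed.

Lemma Csum_nn cF cG n : (forall k, 0 <= cF k) -> (forall j, 0 <= cG j) -> 0 <= Csum cF cG n.
Proof. intros. eapply Rle_trans; [apply (Cst_nn cF cG (Eit 0)); auto|apply Csum_ge; auto; lia]. Qed.

Lemma comp_bound (f g : R -> R) (b : bool) (cF cG : nat -> R) (D : R) (n : nat) :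
  Cn n f -> Cn n g -> 1 <= D -> (forall k, 0 <= cF k) -> (forall j, 0 <= cG j) ->
  (forall x, 0 <= x <= 1 ->
    (forall k, (k <= n)%nat -> Rabs (Derive_n f k (g x)) <= cF k * D ^ (if b then (k * k)%nat else 0%nat)) /\
    (forall j, (j <= n)%nat -> Rabs (Derive_n g j x) <= cG j * D ^ (if b then 0%nat else (j * j)%nat))) ->
  forall i x, (i <= n)%nat -> 0 <= x <= 1 ->
    Rabs (Derive_n (fun t => f (g t)) i x) <= Csum cF cG n * D ^ (n * n).
Proof.
  intros Hf Hg HD HcF HcG Hat i x Hi Hx.
  rewrite (Dn_comp f g n i x Hf Hg Hi).
  destruct (Hat x Hx) as [HF HG].
  eapply Rle_trans; [apply (bound_ev f g b cF cG D n); auto; pose proof (ord_E i); lia|].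
  pose proof (wt_E b i).
  apply Rmult_le_compat; [apply Cst_nn; auto|left; apply pow_lt; lra|apply Csum_ge; auto|].
  apply Rle_pow; auto; nia.
Qed.

Lemma star_le_of n g c : (forall i x, (i <= n)%nat -> 0 <= x <= 1 -> Rabs (Derive_n g i x) <= c) ->
  Rbar_le (cnorm_star n g) (Finite c).
Proof.
  intros H. unfold cnorm_star. apply (proj2 (Lub_Rbar_correct _)).
  intros r (i & x & Hi & Hx & ->). simpl. apply H; auto.
Qed.

Lemma elem_le_star n g i x : (i <= n)%nat -> 0 <= x <= 1 ->
  Rbar_le (Finite (Rabs (Derive_n g i x))) (cnorm_star n g).
Proof.
  intros Hi Hx. unfold cnorm_star. apply (proj1 (Lub_Rbar_correct _)). exists i, x. auto.
Qed.

Lemma star_le_cnorm n g gi : Rbar_le (cnorm_star n g) (cnorm n g gi) /\ Rbar_le (cnorm_star n gi) (cnorm n g gi).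
Proof.
  unfold cnorm. destruct Rbar_le_dec as [H|H].
  - split; auto. apply Rbar_le_refl.
  - split; [apply Rbar_le_refl|]. apply Rbar_lt_le, Rbar_not_le_lt, H.
Qed.

Lemma cnorm_le_of n g gi c :
  Rbar_le (cnorm_star n g) (Finite c) -> Rbar_le (cnorm_star n gi) (Finite c) -> Rbar_le (cnorm n g gi) (Finite c).
Proof. unfold cnorm. destruct Rbar_le_dec; auto. Qed.

Lemma one_bound n h j : Cn n h -> (j <= n)%nat -> exists M,
  forall x, 0 <= x <= 1 -> Rabs (Derive_n h j x) <= M.
Proof.
  intros Hh Hj.
  destruct (continuity_ab_maj (fun x => Rabs (Derive_n h j x)) 0 1) as [Mx [HM _]].
  - lra.
  - intros c _. apply continuity_pt_filterlim.
    apply continuous_Rabs_comp. apply (Hh j c Hj).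
  - exists (Rabs (Derive_n h j Mx)). exact HM.
Qed.

Lemma unif_bound n h : Cn n h -> exists M, 0 <= M /\
  forall j x, (j <= n)%nat -> 0 <= x <= 1 -> Rabs (Derive_n h j x) <= M.
Proof.
  intros Hh.
  assert (forall m, (m <= n)%nat -> exists M, 0 <= M /\
    forall j x, (j <= m)%nat -> 0 <= x <= 1 -> Rabs (Derive_n h j x) <= M).
  { induction m; intros Hm.
    - destruct (one_bound n h 0 Hh ltac:(lia)) as [M HM].
      exists (Rmax 0 M). split; [apply Rmax_l|].
      intros j x Hj Hx. replace j with 0%nat by lia.
      eapply Rle_trans; [apply HM; auto|apply Rmax_r].
    - destruct (IHm ltac:(lia)) as [M1 [H0 H1]].
      destruct (one_bound n h (S m) Hh Hm) as [M2 H2].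
      exists (Rmax M1 M2). split; [eapply Rle_trans; [exact H0|apply Rmax_l]|].
      intros j x Hj Hx. destruct (Nat.eq_dec j (S m)) as [->|].
      + eapply Rle_trans; [apply H2; auto|apply Rmax_r].
      + eapply Rle_trans; [apply H1; auto; lia|apply Rmax_l]. }
  apply H; lia.
Qed.

Lemma A_bound rho s delta A Ainv : A_hyp rho s delta A Ainv -> 0 < delta ->
  forall k y, 0 <= y <= 1 ->
   Rabs (Derive_n A k y) <= Rabs (rho k) * (/ delta) ^ (k * k) /\
   Rabs (Derive_n Ainv k y) <= Rabs (rho k) * (/ delta) ^ (k * k).
Proof.
  intros [_ [_ [_ [_ [_ [_ Hn]]]]]] Hd k y Hy.
  specialize (Hn k). destruct (star_le_cnorm k A Ainv) as [H1 H2].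
  assert (P : 0 < (/ delta) ^ (k * k)) by (apply pow_lt; apply Rinv_0_lt_compat; lra).
  assert (Q : rho k / delta ^ (k * k) <= Rabs (rho k) * (/ delta) ^ (k * k)).
  { unfold Rdiv. rewrite <- pow_inv. apply Rmult_le_compat_r; [lra|apply Rle_abs]. }
  split.
  - assert (T := Rbar_le_trans _ _ _ (elem_le_star k A k y (Nat.le_refl _) Hy) (Rbar_le_trans _ _ _ H1 Hn)).
    simpl in T. lra.
  - assert (T := Rbar_le_trans _ _ _ (elem_le_star k Ainv k y (Nat.le_refl _) Hy) (Rbar_le_trans _ _ _ H2 Hn)).
    simpl in T. lra.
Qed.

Theorem lemma3p4 (rho : nat -> R) (A Ainv : R -> R -> R -> R)
  (HA : forall s delta, admissible s delta -> A_hyp rho s delta (A s delta) (Ainv s delta))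
  (n : nat) (h hinv : R -> R) (Hh : Cn_diffeo n h hinv) :
  exists c : R, forall s delta, admissible s delta ->
    Rbar_le (cnorm n (fun x => A s delta (h x)) (fun y => hinv (Ainv s delta y)))
            (Finite (c / delta ^ (n * n))).
Proof.
  destruct Hh as [Ch [Chi [Hmap1 Hmap2]]].
  destruct (unif_bound n h Ch) as [Mh [HMh0 HMh]].
  destruct (unif_bound n hinv Chi) as [Mi [HMi0 HMi]].
  set (cF1 := fun k : nat => Rabs (rho k)). set (cG1 := fun _ : nat => Mh).
  set (cF2 := fun _ : nat => Mi). set (cG2 := fun j : nat => Rabs (rho j)).
  assert (N1 : forall k, 0 <= cF1 k) by (intro; apply Rabs_pos).
  assert (N2 : forall k, 0 <= cG1 k) by (intro; exact HMh0).
  assert (N3 : forall k, 0 <= cF2 k) by (intro; exact HMi0).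
  assert (N4 : forall k, 0 <= cG2 k) by (intro; apply Rabs_pos).
  pose proof (Csum_nn cF1 cG1 n N1 N2). pose proof (Csum_nn cF2 cG2 n N3 N4).
  exists (Csum cF1 cG1 n + Csum cF2 cG2 n).
  intros s delta Had.
  pose proof (HA s delta Had) as HAh. pose proof HAh as HAf.
  destruct Had as [Hs [Hd [Hds [k Hk]]]].
  assert (Hs1 : s <= 1).
  { assert (1 <= / s).
    { rewrite Hk. destruct k; [simpl in Hk; pose proof (Rinv_0_lt_compat s Hs); lra|].
      apply (le_INR 1); lia. }
    replace s with (/ / s) by (field; lra).
    replace 1 with (/ 1) by field. apply Rinv_le_contravar; lra. }
  set (D := / delta).
  assert (HD : 1 <= D).
  { unfold D. replace 1 with (/ 1) by field. apply Rinv_le_contravar; lra. }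
  assert (HP : 0 < D ^ (n * n)) by (apply pow_lt; lra).
  destruct HAh as [Hdiff _].
  destruct (Hdiff n) as [CA [CAi [_ HAmap]]].
  assert (Hc : Csum cF1 cG1 n + Csum cF2 cG2 n / delta ^ (n * n) = 0 \/ True) by auto. clear Hc.
  replace ((Csum cF1 cG1 n + Csum cF2 cG2 n) / delta ^ (n * n))
    with ((Csum cF1 cG1 n + Csum cF2 cG2 n) * D ^ (n * n)) by (unfold D, Rdiv; rewrite pow_inv; reflexivity).
  apply cnorm_le_of; apply star_le_of; intros i x Hi Hx.
  - eapply Rle_trans.
    + apply (comp_bound (A s delta) h true cF1 cG1 D n); auto.
      intros y Hy. split.
      * intros kk Hkk. simpl. unfold cF1. apply (proj1 (A_bound rho s delta (A s delta) (Ainv s delta) HAf Hd kk (h y) (proj1 (Hmap1 y Hy)))).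
      * intros j Hj. simpl. unfold cG1. rewrite Rmult_1_r. apply HMh; auto.
    + apply Rmult_le_compat_r; lra.
  - eapply Rle_trans.
    + apply (comp_bound hinv (Ainv s delta) false cF2 cG2 D n); auto.
      * intros y Hy. split.
        -- intros kk Hkk. simpl. unfold cF2. rewrite Rmult_1_r. apply HMi; auto.
           apply HAmap; auto.
        -- intros j Hj. simpl. unfold cG2. apply (proj2 (A_bound rho s delta (A s delta) (Ainv s delta) HAf Hd j y Hy)).
    + apply Rmult_le_compat_r; lra.
Qed.
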